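(* Let $\varphi=\ell(p_1)\wedge\dots\wedge\ell(p_n)$, where the $p_i\in At$ are distinct and each $\ell(p_i)\in\{p_i,\neg p_i\}$. Let $(\mathcal{M},w)$ be a pointed Kripke model with $(\mathcal{M},w)\vDash\varphi$, and let $a\in Ag$. Let $S\subseteq At(\varphi)$ be the unique set such that $(\mathcal{M},w)\vDash\bigwedge_{p\in S}\mathsf{h}_a p\wedge\bigwedge_{p\in At(\varphi)\setminus S}\neg\mathsf{h}_a p$, and let $\varphi_S=\bigwedge_{p\in S}\ell(p)$. Then $\mathcal{F}(\varphi)$ and $\mathcal{F}(\varphi_S)$ are both applicable in $(\mathcal{M},w)$. Write $(\mathcal{M},w)\otimes\mathcal{F}(\varphi)=(\mathcal{M}^\varphi,(w,e))$ with $\mathcal{M}^\varphi=(W^\varphi,R^\varphi,V^\varphi)$, and $(\mathcal{M},w)\otimes\mathcal{F}(\varphi_S)=(\mathcal{M}^{\varphi_S},(w,e'))$ with $\mathcal{M}^{\varphi_S}=(W^{\varphi_S},R^{\varphi_S},V^{\varphi_S})$. Then: (1) $R^\varphi_a[(w,e)]=R^{\varphi_S}_a[(w,e')]$; (2) for every $(v,f)\in R^\varphi_a[(w,e)]$, the pointed models $(\mathcal{M}^\varphi,(v,f))$ and $(\mathcal{M}^{\varphi_S},(v,f))$ are bisimilar.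
   Context: $Ag$ is a finite set of agents and $At$ a finite set of propositional atoms. $H=\{\mathsf{h}_a p: a\in Ag, p\in At\}$ is the set of attention atoms; $\mathsf{h}_a p$ reads ''$a$ pays attention to whether $p$''. Language $\mathcal{L}$: $\varphi::=\top\mid p\mid \mathsf{h}_a p\mid\neg\varphi\mid\varphi\wedge\varphi\mid B_a\varphi\mid[\mathcal{E}]\varphi$, with $\mathcal{E}$ a multi-pointed event model. $At(\varphi)$ is the set of atoms of $At$ occurring in $\varphi$. Conjunctions of literals: - Literals are atoms in $At\cup H\cup\{\top\}$ or their negations. - Conjunctions of literals are kept in a normal form: each atom occurs at most once; $\top$ is not a conjunct unless the formula is $\top$; the order is fixed. The empty conjunction is $\top$. - For a conjunction of literals $e$, ''$\ell\in e$'' means $\ell$ is a conjunct of $e$. Kripke models: - A Kripke model is $\mathcal{M}=(W,R,V)$ with $W$ finite nonempty, $R_a\subseteq W^2$ for each $a$, and $V:W\to\mathcal{P}(At\cup H)$. - For a relation $R_a$ and a state $x$, $R_a[x]=\{y:(x,y)\in R_a\}$. Event models: - An event model is $(E,Q,pre)$ with $E$ finite nonempty, $Q_a\subseteq E^2$ for each $a$, and $pre:E\to\mathcal{L}$. A multi-pointed event model adds $E_d\subseteq E$. - Product update: $\mathcal{M}\otimes\mathcal{E}=(W',R',V')$ where $W'=\{(w,e):(\mathcal{M},w)\vDash pre(e)\}$, $R'_a=\{((w,e),(v,f))\in W'^2:(w,v)\in R_a,(e,f)\in Q_a\}$, and $V'((w,e))=V(w)$. - $(\mathcal{E},E_d)$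 is applicable in $(\mathcal{M},w)$ iff there is a unique $e\in E_d$ with $(\mathcal{M},w)\vDash pre(e)$. In that case $(\mathcal{M},w)\otimes(\mathcal{E},E_d)=(\mathcal{M}\otimes\mathcal{E},(w,e))$. Satisfaction: - $q\in At\cup H$ holds at $w$ iff $q\in V(w)$; Boolean connectives are standard. - $B_a\varphi$ holds at $w$ iff $\varphi$ holds at all $R_a$-successors of $w$. - $[\mathcal{E}]\varphi$ holds at $(\mathcal{M},w)$ iff, if $\mathcal{E}$ is applicable in $(\mathcal{M},w)$, then $(\mathcal{M},w)\otimes\mathcal{E}\vDash\varphi$. Propositional attention event model $\mathcal{F}(\varphi)$, for $\varphi=\ell(p_1)\wedge\dots\wedge\ell(p_n)$ as in the claim (including $\varphi=\top$ when $n=0$): - It is $((E,Q,id_E),E_d)$, so each event is a formula and is its own precondition. - Events: $E$ is the set of all normal-form conjunctions $\bigwedge_{p\in S'}\ell(p)\wedge\bigwedge_{b\in Ag}\big(\bigwedge_{p\in X_b}\mathsf{h}_b p\wedge\bigwedge_{p\in S'\setminus X_b}\neg\mathsf{h}_b p\big)$, for $S'\subseteq At(\varphi)$ and $X_b\subseteq S'$ for each $b\in Ag$. - Relations: $(e,f)\in Q_b$ iff for all $p\in At(\varphi)$ both of the following hold: - (Attentiveness) if $\mathsf{h}_b p\in e$ then $\mathsf{h}_b p\in f$ and $\ell(p)\in f$; - (Inertia) if $\mathsf{h}_b p\notin e$ then $\ell(p)\notin f$. - Designated events: $E_d$ is the set of events containing every literal of $\varphi$. Bisimulation is the standard notion for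 Kripke models over all agents in $Ag$ and atoms in $At\cup H$: agreement on atoms, plus forth and back conditions for each $R_a$. *)

(* Defs.v *)
From mathcomp Require Import all_boot.
Unset Implicit Arguments.

Unset Printing Implicit Defensive.

Section DEL.
Variables (Ag At : finType).

(* Atoms of At ∪ H : [inl p] is the propositional atom p,
   [inr (a,p)] is the attention atom h_a p. *)
Definition atom : finType := (At + Ag * At)%type.

(* The language L.  The event model in [Upd] is given syntactically:
   events are 0..ne (so there are ne+1 >= 1 of them), relations Q,
   preconditions pre (a map events -> L), designated events Ed. *)
Inductive form : Type :=
| Top : form
| PAt : At -> form
| HAt : Ag -> At -> form
| Neg : form -> form
| Conj : form -> form -> form
| Bel : Ag -> form -> form
| Upd : forall (ne : nat) (Q : Ag -> nat -> nat -> bool) (pre : nat -> form)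
               (Ed : nat -> bool), form -> form.

Record kmodel := KModel {
  W : Type;
  R : Ag -> W -> W -> Prop;
  V : W -> atom -> Prop }.

(* W finite (nonemptiness is witnessed by the point of a pointed model). *)
Definition is_kripke (M : kmodel) : Prop :=
  exists (n : nat) (f : 'I_n -> W M), forall x, exists i, f i = x.

Definition prodP (M : kmodel) (ev : Type) (E : ev -> Prop)
  (Q : Ag -> ev -> ev -> Prop) (P : W M -> ev -> Prop) : kmodel :=
  {| W := {x : W M * ev | E x.2 /\ P x.1 x.2};
     R := fun a s t => R M a (sval s).1 (sval t).1 /\ Q a (sval s).2 (sval t).2;
     V := fun s => V M (sval s).1 |}.

Fixpoint sat (M : kmodel) (w : W M) (f : form) {struct f} : Prop :=
  match f with
  | Top => True
  | PAt p => V M w (inl p)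
  | HAt a p => V M w (inr (a, p))
  | Neg g => ~ sat M w g
  | Conj g h => sat M w g /\ sat M w h
  | Bel a g => forall v, R M a w v -> sat M v g
  | Upd ne Q pre Ed g =>
      forall (i : nat) (Hi : (i <= ne) /\ sat M w (pre i)),
        Ed i ->
        (forall j, j <= ne -> Ed j -> sat M w (pre j) -> j = i) ->
        sat (prodP M nat (fun j => j <= ne) (fun a j k => Q a j k)
                   (fun v j => sat M v (pre j)))
            (exist _ (w, i) Hi) g
  end.

Record mevmodel := MEv {
  ev : Type;
  evE : ev -> Prop;
  evQ : Ag -> ev -> ev -> Prop;
  evpre : ev -> form;
  evD : ev -> Prop }.

Definition update (M : kmodel) (Em : mevmodel) : kmodel :=
  prodP M (ev Em) (evE Em) (evQ Em) (fun v e => sat M v (evpre Em e)).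

Definition applicable (M : kmodel) (w : W M) (Em : mevmodel) : Prop :=
  exists! e, evD Em e /\ sat M w (evpre Em e).

Definition is_point (M : kmodel) (w : W M) (Em : mevmodel)
  (s : W (update M Em)) : Prop :=
  (sval s).1 = w /\ evD Em (sval s).2.

Definition bisimulation (M1 M2 : kmodel) (Z : W M1 -> W M2 -> Prop) : Prop :=
  forall x y, Z x y ->
    (forall q, V M1 x q <-> V M2 y q) /\
    (forall a x', R M1 a x x' -> exists y', R M2 a y y' /\ Z x' y') /\
    (forall a y', R M2 a y y' -> exists x', R M1 a x x' /\ Z x' y').

Definition bisimilar (M1 : kmodel) (x : W M1) (M2 : kmodel) (y : W M2) : Prop :=
  exists Z, bisimulation M1 M2 Z /\ Z x y.

Definition literal : Type := (atom * bool)%type.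

Definition atom_form (q : atom) : form :=
  match q with inl p => PAt p | inr (a, p) => HAt a p end.

Definition lit_form (l : literal) : form :=
  if l.2 then atom_form l.1 else Neg (atom_form l.1).

Fixpoint conj_list (ls : seq literal) : form :=
  match ls with
  | [::] => Top
  | [:: l] => lit_form l
  | l :: ls' => Conj (lit_form l) (conj_list ls')
  end.

Definition lit_le (l1 l2 : literal) : bool :=
  (enum_rank l1.1 <= enum_rank l2.1)%N.

Definition nf (ls : seq literal) : form := conj_list (sort lit_le ls).

Fixpoint conjuncts (f : form) : seq form :=
  match f with
  | Top => [::]
  | Conj g h => g :: conjuncts h
  | _ => [:: f]
  end.

Fixpoint inl_form (f : form) (s : seq form) : Prop :=
  match s with [::] => False | g :: s' => g = f \/ inl_form f s' end.

Definition in_conj (l : literal) (e : form) : Prop := inl_form (lit_form l) (conjuncts e).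

Definition phi_of (ls : seq (At * bool)) : form :=
  nf [seq (inl x.1, x.2) : literal | x <- ls].

Definition atset (ls : seq (At * bool)) : {set At} := [set p | p \in map fst ls].

Definition pol (ls : seq (At * bool)) (p : At) : bool := (p, true) \in ls.

Definition ell (ls : seq (At * bool)) (p : At) : literal := (inl p, pol ls p).

Definition hlit (b : Ag) (p : At) : literal := (inr (b, p), true).

Definition evlits (ls : seq (At * bool)) (S' : {set At}) (X : Ag -> {set At})
  : seq literal :=
  [seq ell ls p | p <- enum S'] ++
  [seq ((inr (b, p), p \in X b) : literal) | b <- enum Ag, p <- enum S'].

Definition Fevent (ls : seq (At * bool)) (e : form) : Prop :=
  exists (S' : {set At}) (X : Ag -> {set At}),
    S' \subset atset ls /\ (forall b, X b \subset S') /\ e = nf (evlits ls S' X).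

Definition FQ (ls : seq (At * bool)) (b : Ag) (e f : form) : Prop :=
  forall p, p \in atset ls ->
    (in_conj (hlit b p) e -> in_conj (hlit b p) f /\ in_conj (ell ls p) f) /\
    (~ in_conj (hlit b p) e -> ~ in_conj (ell ls p) f).

Definition FD (ls : seq (At * bool)) (e : form) : Prop :=
  Fevent ls e /\ forall p, p \in atset ls -> in_conj (ell ls p) e.

Definition Fmodel (ls : seq (At * bool)) : mevmodel :=
  {| ev := form; evE := Fevent ls; evQ := FQ ls; evpre := id; evD := FD ls |}.

Definition hconj (ls : seq (At * bool)) (a : Ag) (S : {set At}) : form :=
  nf ([seq ((inr (a, p), true) : literal) | p <- enum S] ++
      [seq ((inr (a, p), false) : literal) | p <- enum (atset ls :\: S)]).

End DEL.

Arguments Top {Ag At}.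
Arguments W {Ag At} k.
Arguments R {Ag At} k _ _ _.
Arguments V {Ag At} k _ _.
Arguments is_kripke {Ag At} M.
Arguments sat {Ag At} M w f.
Arguments update {Ag At} M Em.
Arguments applicable {Ag At} M w Em.
Arguments is_point {Ag At} M w Em s.
Arguments bisimilar {Ag At} M1 x M2 y.
Arguments phi_of {Ag At} ls.
Arguments atset {At} ls.
Arguments Fmodel {Ag At} ls.
Arguments hconj {Ag At} ls a S.

(* Main.v *)
Require Import Defs.
From mathcomp Require Import all_boot.
From Stdlib Require Import ClassicalEpsilon.

Section Help.
Variables (Ag At : finType).
Local Notation form := (form Ag At).
Local Notation literal := (literal Ag At).
Local Notation lit_form := (@lit_form Ag At).
Local Notation in_conj := (@in_conj Ag At).

Lemma conjuncts_lit (l : literal) : conjuncts Ag At (lit_form l) = [:: lit_form l].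
Proof. by case: l => [[p|[b p]] []]. Qed.

Lemma conjuncts_conj_list (s : seq literal) :
  conjuncts Ag At (conj_list Ag At s) = map lit_form s.
Proof.
elim: s => [|x s IH] //.
case: s IH => [|y s] IH; first exact: conjuncts_lit.
by rewrite [conj_list _ _ _]/= [conjuncts _ _ _]/= IH.
Qed.

Lemma lit_form_inj : injective lit_form.
Proof.
move=> [[p|[b p]] []] [[q|[c q]] []] //= H; inversion H; by subst.
Qed.

Lemma inl_map (l : literal) s :
  inl_form Ag At (lit_form l) (map lit_form s) <-> l \in s.
Proof.
elim: s => [|x s IH] /=; first by split.
rewrite in_cons; split.
- by case=> [/lit_form_inj ->|/IH H]; rewrite ?eqxx ?H ?orbT.
- by case/orP=> [/eqP ->|H]; [left|right; exact/IH].
Qed.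

Lemma in_conj_nf (l : literal) s : in_conj l (nf Ag At s) <-> l \in s.
Proof. by rewrite /in_conj /nf conjuncts_conj_list inl_map mem_sort. Qed.

Variable M : kmodel Ag At.

Lemma sat_atom w q : sat M w (atom_form Ag At q) <-> V M w q.
Proof. by case: q => [p|[b p]]. Qed.

Lemma sat_lit w q (c : bool) :
  sat M w (lit_form (q, c)) <-> (if c then V M w q else ~ V M w q).
Proof. by case: c => /=; rewrite sat_atom. Qed.

Lemma sat_conj_list w (s : seq literal) :
  sat M w (conj_list Ag At s) <-> forall l, l \in s -> sat M w (lit_form l).
Proof.
elim: s => [|x s IH]; first by split.
case: s IH => [|y s] IH.
  split=> [H l|H]; last by apply: H; rewrite mem_seq1.
  by rewrite mem_seq1 => /eqP ->.
change (sat M w (lit_form x) /\ sat M w (conj_list Ag At (y :: s)) <->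
   (forall l, l \in x :: y :: s -> sat M w (lit_form l))).
rewrite IH; split.
- by case=> H1 H2 l; rewrite in_cons => /orP[/eqP ->|]; [|apply: H2].
- move=> H; split; first by apply: H; rewrite mem_head.
  by move=> l Hl; apply: H; rewrite in_cons Hl orbT.
Qed.

Lemma sat_nf w s : sat M w (nf Ag At s) <-> forall l, l \in s -> sat M w (lit_form l).
Proof. rewrite /nf sat_conj_list; split=> H l Hl; apply: H; by rewrite ?mem_sort in Hl *. Qed.

Local Notation ell := (@ell Ag At).
Local Notation hlit := (@hlit Ag At).
Local Notation evlits := (@evlits Ag At).
Local Notation Fevent := (@Fevent Ag At).
Local Notation FQ := (@FQ Ag At).
Local Notation FD := (@FD Ag At).
Local Notation nf := (@nf Ag At).

Lemma mem_evlits ls (S' : {set At}) (X : Ag -> {set At}) (x : literal) :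
  x \in evlits ls S' X <->
  (exists2 p, p \in S' & x = ell ls p) \/
  (exists b p, p \in S' /\ x = ((inr (b, p), p \in X b) : literal)).
Proof.
rewrite /evlits mem_cat; split.
- case/orP=> [/mapP[p] | /allpairsP[[b p] [_ /=]]].
    by rewrite mem_enum => Hp ->; left; exists p.
  by rewrite mem_enum => Hp ->; right; exists b, p.
- case=> [[p Hp ->] | [b [p [Hp ->]]]].
    by rewrite map_f // mem_enum.
  apply/orP; right; apply/allpairsP; exists (b, p) => /=.
  by rewrite !mem_enum Hp.
Qed.

Lemma inl_evlits ls (S' : {set At}) (X : Ag -> {set At}) p c :
  ((inl p, c) : literal) \in evlits ls S' X -> p \in S' /\ c = pol At ls p.
Proof.
case/mem_evlits=> [[q Hq [-> ->]] // | [b [q [_ E]]]] //.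
Qed.

Lemma inr_evlits ls (S' : {set At}) (X : Ag -> {set At}) b p c :
  ((inr (b, p), c) : literal) \in evlits ls S' X -> p \in S' /\ c = (p \in X b).
Proof.
case/mem_evlits=> [[q Hq E] // | [b' [q [Hq [-> -> ->]]]]] //.
Qed.

Lemma ell_evlits ls (S' : {set At}) (X : Ag -> {set At}) p : p \in S' -> ell ls p \in evlits ls S' X.
Proof. by move=> Hp; apply/mem_evlits; left; exists p. Qed.

Lemma h_evlits ls (S' : {set At}) (X : Ag -> {set At}) b p : p \in S' ->
  ((inr (b, p), p \in X b) : literal) \in evlits ls S' X.
Proof. by move=> Hp; apply/mem_evlits; right; exists b, p. Qed.

Lemma ell_in_conj ls (S' : {set At}) (X : Ag -> {set At}) p :
  in_conj (ell ls p) (nf (evlits ls S' X)) <-> p \in S'.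
Proof.
rewrite in_conj_nf; split; first by case/inl_evlits.
exact: ell_evlits.
Qed.

Lemma F1 ls f b p : Fevent ls f -> in_conj (hlit b p) f -> in_conj (ell ls p) f.
Proof.
case=> S' [X [_ [_ ->]]]; rewrite in_conj_nf ell_in_conj.
by case/inr_evlits.
Qed.

Lemma F3 ls f p : Fevent ls f -> in_conj (ell ls p) f -> p \in atset ls.
Proof.
case=> S' [X [HS [_ ->]]]; rewrite ell_in_conj; exact: (subsetP HS).
Qed.

Lemma F2 ls f v b p : Fevent ls f -> sat M v f -> in_conj (ell ls p) f ->
  (in_conj (hlit b p) f <-> V M v (inr (b, p))).
Proof.
case=> S' [X [_ [_ ->]]]; rewrite ell_in_conj sat_nf => Hs Hp.
rewrite in_conj_nf; split.
  by move=> H; move: (Hs _ H); rewrite sat_lit.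
move=> HV; have := h_evlits ls S' X b p Hp.
case E: (p \in X b) => // H; move: (Hs _ H); rewrite sat_lit; by [].
Qed.

Local Notation phi_of := (@phi_of Ag At).

Lemma uniq_fst_eq (s : seq (At * bool)) x y :
  uniq (map fst s) -> x \in s -> y \in s -> x.1 = y.1 -> x = y.
Proof.
elim: s => //= z s IH /andP[Hz Hu].
rewrite !in_cons => /orP[/eqP->|Hx] /orP[/eqP->|Hy] E //.
- by rewrite E map_f in Hz.
- by rewrite -E map_f in Hz.
- exact: IH.
Qed.

Lemma pol_uniq ls p c : uniq (map fst ls) -> (p, c) \in ls -> pol At ls p = c.
Proof.
move=> Hu Hin; rewrite /pol; case: c Hin => // Hin.
apply/negP => H; by have := uniq_fst_eq _ _ _ Hu H Hin erefl.
Qed.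

Lemma sat_ell ls w p : uniq (map fst ls) -> sat M w (phi_of ls) ->
  p \in atset ls -> sat M w (lit_form (ell ls p)).
Proof.
move=> Hu; rewrite /phi_of sat_nf => H; rewrite inE => /mapP[[q c] Hx /= ->].
rewrite /Defs.ell (pol_uniq _ _ _ Hu Hx); apply: H.
by apply/mapP; exists (q, c).
Qed.

Definition bV (P : Prop) : bool := if excluded_middle_informative P then true else false.
Lemma bVP P : bV P <-> P.
Proof. by rewrite /bV; case: excluded_middle_informative. Qed.

Lemma app_F ls w : uniq (map fst ls) -> sat M w (phi_of ls) ->
  applicable M w (Fmodel ls).
Proof.
move=> Hu Hphi.
pose X := fun b => [set p in atset ls | bV (V M w (inr (b, p)))].
exists (nf (evlits ls (atset ls) X)); split.
  split; last first.
    rewrite /= sat_nf => l /mem_evlits [[p Hp ->]|[b [p [Hp ->]]]].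
      exact: sat_ell.
    rewrite sat_lit inE Hp /=; case E: bV.
      exact/bVP.
    by move=> HV; move/bVP: HV; rewrite E.
  split; last by move=> p Hp; rewrite ell_in_conj.
  exists (atset ls), X; split => //; split => // b.
  by apply/subsetP => p; rewrite inE => /andP[].
move=> e [[[S2 [X2 [HS2 [HX2 ->]]]] Hall] /= Hs].
have ES : S2 = atset ls.
  apply/eqP; rewrite eqEsubset HS2 /=; apply/subsetP => p Hp.
  by move: (Hall p Hp); rewrite ell_in_conj.
subst S2; congr nf; rewrite /Defs.evlits; congr (_ ++ _).
apply/eq_in_allpairs => b p _; rewrite mem_enum => Hp; congr (_, _).
move: Hs; rewrite sat_nf => Hs.
have := Hs _ (h_evlits ls (atset ls) X2 b p Hp).
rewrite sat_lit inE Hp /=; case: (p \in X2 b) => H.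
  exact/bVP.
by apply/negbTE/negP => /bVP.
Qed.

Section Filt.
Variables (ls : seq (At * bool)) (S : {set At}).
Local Notation ls' := [seq x <- ls | x.1 \in S].

Lemma atset_filter : S \subset atset ls -> atset ls' = S.
Proof.
move=> HS; apply/setP => p; rewrite inE; apply/idP/idP.
  by case/mapP => x; rewrite mem_filter => /andP[Hx _] ->.
move=> Hp; move: (subsetP HS p Hp); rewrite inE => /mapP[x Hx E].
by apply/mapP; exists x => //; rewrite mem_filter -E Hp.
Qed.

Lemma pol_filter p : p \in S -> pol At ls' p = pol At ls p.
Proof. by move=> Hp; rewrite /pol mem_filter Hp. Qed.

Lemma ell_filter p : p \in S -> ell ls' p = ell ls p.
Proof. by move=> Hp; rewrite /Defs.ell pol_filter. Qed.

Lemma uniq_filter : uniq (map fst ls) -> uniq (map fst ls').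
Proof. by apply: subseq_uniq; apply: map_subseq; apply: filter_subseq. Qed.

Lemma sat_phi_filter w : sat M w (phi_of ls) -> sat M w (phi_of ls').
Proof.
rewrite /phi_of !sat_nf => H l /mapP[x]; rewrite mem_filter => /andP[_ Hx] ->.
by apply: H; apply/mapP; exists x.
Qed.

Lemma evlits_filter (S' : {set At}) X : S' \subset S ->
  evlits ls' S' X = evlits ls S' X.
Proof.
move=> HS'; rewrite /Defs.evlits; congr (_ ++ _); apply/eq_in_map => p.
by rewrite mem_enum => Hp; rewrite ell_filter //; apply: (subsetP HS').
Qed.

Definition PS (f : form) := forall p, p \notin S -> ~ in_conj (ell ls p) f.

Lemma Fev_iff f : S \subset atset ls ->
  Fevent ls' f <-> Fevent ls f /\ PS f.
Proof.
move=> HS; split.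
  case=> S' [X [HS' [HX ->]]]; rewrite atset_filter // in HS'.
  rewrite evlits_filter //; split.
    exists S', X; split=> //; exact: subset_trans HS.
  move=> p Hp; rewrite ell_in_conj => H.
  by move: Hp; rewrite (subsetP HS' p H).
case=> [[S' [X [HS' [HX ->]]]] P].
have HS'S : S' \subset S.
  apply/subsetP => p Hp; apply/negPn/negP => Hn; apply: (P p Hn).
  by rewrite ell_in_conj.
exists S', X; rewrite atset_filter // evlits_filter //.
Qed.

Lemma succ_iff b f g : S \subset atset ls -> Fevent ls f -> PS f ->
  (Fevent ls g /\ FQ ls b f g) <-> (Fevent ls' g /\ FQ ls' b f g).
Proof.
move=> HS Hf Pf; split.
  case=> Hg HQ.
  have Pg : PS g.
    move=> p Hn; case Hpa: (p \in atset ls).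
      apply: ((HQ p Hpa).2) => h; apply: (Pf p Hn); exact: (F1 _ _ _ _ Hf h).
    by move=> H; move: (F3 _ _ _ Hg H); rewrite Hpa.
  split; first by apply/Fev_iff.
  move=> p; rewrite atset_filter // => HpS; rewrite ell_filter //.
  by apply: HQ; apply: (subsetP HS).
case=> /(Fev_iff _ HS) [Hg Pg] HQ'; split=> // p Hpa.
case HpS: (p \in S).
  by move: (HQ' p); rewrite atset_filter // ell_filter //; apply.
split.
  move=> h; exfalso; apply: (Pf p); [by rewrite HpS | exact: (F1 _ _ _ _ Hf h)].
by move=> _; apply: Pg; rewrite HpS.
Qed.

Definition Cf a (f : form) := forall p, p \in S -> in_conj (hlit a p) f /\ in_conj (ell ls p) f.

Lemma FQe_iff e f w a : S \subset atset ls ->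
  (forall p, p \in atset ls -> (V M w (inr (a, p)) <-> p \in S)) ->
  FD ls e -> sat M w e -> Fevent ls f ->
  (FQ ls a e f <-> Cf a f /\ PS f).
Proof.
move=> HS hS [He Hall] Hse Hf.
have Eh : forall p, p \in atset ls -> (in_conj (hlit a p) e <-> p \in S).
  move=> p Hp; rewrite (F2 _ _ _ _ _ He Hse (Hall p Hp)); exact: hS.
split.
  move=> HQ; split.
    move=> p HpS; have Hpa := subsetP HS p HpS; apply: (HQ p Hpa).1; exact/Eh.
  move=> p Hn; case Hpa: (p \in atset ls).
    apply: (HQ p Hpa).2; move/(Eh p Hpa); by rewrite (negbTE Hn).
  by move=> H; move: (F3 _ _ _ Hf H); rewrite Hpa.
case=> HC HP p Hpa; split.
  by move/(Eh p Hpa)/HC.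
move=> Hn; apply: HP; apply/negP => HpS; apply: Hn; exact/(Eh p Hpa).
Qed.

Lemma FQe'_iff e' f w a : S \subset atset ls ->
  (forall p, p \in atset ls -> (V M w (inr (a, p)) <-> p \in S)) ->
  FD ls' e' -> sat M w e' -> (FQ ls' a e' f <-> Cf a f).
Proof.
move=> HS hS [He Hall] Hse.
have Eh : forall p, p \in S -> in_conj (hlit a p) e'.
  move=> p HpS; have Hpa : p \in atset ls' by rewrite atset_filter.
  rewrite (F2 _ _ _ _ _ He Hse (Hall p Hpa)); apply/hS => //.
  exact: (subsetP HS).
split.
  move=> HQ p HpS; rewrite -(ell_filter p HpS); apply: (HQ p _).1 (Eh p HpS).
  by rewrite atset_filter.
move=> HC p; rewrite atset_filter // => HpS; rewrite ell_filter //; split.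
  by move=> _; apply: HC.
by move=> H; exfalso; apply: H; apply: Eh.
Qed.

End Filt.

End Help.

Arguments app_F {Ag At M ls w}.
Arguments uniq_filter {At} ls S.
Arguments sat_phi_filter {Ag At M ls S w}.
Arguments Fev_iff {Ag At ls S f}.
Arguments succ_iff {Ag At ls S b f g}.
Arguments FQe_iff {Ag At M ls S e f w a}.
Arguments FQe'_iff {Ag At M ls S e' f w a}.
Arguments PS {Ag At} ls S f.

Theorem lemma4p1 (Ag At : finType) (ls : seq (At * bool))
  (M : kmodel Ag At) (w : W M) (a : Ag) (S : {set At}) :
  uniq (map fst ls) ->
  is_kripke M ->
  sat M w (phi_of ls) ->
  S \subset atset ls ->
  sat M w (hconj ls a S) ->
  let Fphi : mevmodel Ag At := Fmodel ls in
  let FphiS : mevmodel Ag At := Fmodel [seq x <- ls | x.1 \in S] in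
  applicable M w Fphi /\ applicable M w FphiS /\
  forall (s : W (update M Fphi)) (s' : W (update M FphiS)),
    is_point M w Fphi s -> is_point M w FphiS s' ->
    (forall x : W M * form Ag At,
        (exists t, R (update M Fphi) a s t /\ sval t = x) <->
        (exists t', R (update M FphiS) a s' t' /\ sval t' = x)) /\
    (forall t t', R (update M Fphi) a s t -> sval t = sval t' ->
        bisimilar (update M Fphi) t (update M FphiS) t').
Proof.
move=> Hu _ Hphi HS Hh Fphi FphiS.
have hS : forall p, p \in atset ls -> (V M w (inr (a, p)) <-> p \in S).
  move=> p Hpa; move: Hh; rewrite /hconj sat_nf => Hh; case HpS: (p \in S).
    split=> // _; have := Hh ((inr (a, p), true) : literal Ag At) _.
    rewrite sat_lit; apply; rewrite mem_cat; apply/orP; left.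
    by apply/mapP; exists p; rewrite ?mem_enum.
  split=> // HV; have := Hh ((inr (a, p), false) : literal Ag At) _.
  rewrite sat_lit => H; exfalso; apply: H => //.
  rewrite mem_cat; apply/orP; right; apply/mapP; exists p => //.
  by rewrite mem_enum in_setD HpS Hpa.
split; first exact: app_F.
split; first exact: (app_F (uniq_filter ls S Hu) (sat_phi_filter Hphi)).
move=> [[x1 e] [Hev Hsat]] [[x2 e'] [Hev' Hsat']] [/= E1 HD] [/= E2 HD'].
subst x1 x2; simpl in Hsat, Hsat'.
split.
  move=> [v f]; split.
    case=> [[[v0 f0] [Hf Hsf]] [[HR HQ] /= E]]; case: E => ??; subst v0 f0.
    simpl in HQ, HR, Hsf.
    move: HQ; rewrite (FQe_iff HS hS HD Hsat Hf) => [[HC HP]].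
    have Hf' := (Fev_iff HS).2 (conj Hf HP).
    exists (exist _ (v, f) (conj Hf' Hsf)); split=> //; split=> //=.
    by rewrite (FQe'_iff HS hS HD' Hsat').
  case=> [[[v0 f0] [Hf' Hsf]] [[HR HQ] /= E]]; case: E => ??; subst v0 f0.
  simpl in HQ, HR, Hsf.
  move: HQ; rewrite (FQe'_iff HS hS HD' Hsat') => HC.
  have [Hf HP] := (Fev_iff HS).1 Hf'.
  exists (exist _ (v, f) (conj Hf Hsf)); split=> //; split=> //=.
  by rewrite (FQe_iff HS hS HD Hsat Hf).
move=> t t' [HR HQ] E.
exists (fun x y => sval x = sval y /\ PS ls S (sval x).2); split; last first.
  split=> //; move: HQ; rewrite (FQe_iff HS hS HD Hsat (proj1 (proj2_sig t))).
  by case.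
move=> [[u g] [Hg Hsg]] [[u2 g2] [Hg2 Hsg2]] [/= E' Pg]; case: E' => ??.
subst u2 g2; split; first by move=> q /=.
split.
  move=> b [[u3 g3] [Hg3 Hsg3]] [/= HR3 HQ3].
  have [Hg3' HQ3'] := (succ_iff HS Hg Pg).1 (conj Hg3 HQ3).
  exists (exist _ (u3, g3) (conj Hg3' Hsg3)); split => //=.
  by split=> //; case: ((Fev_iff HS).1 Hg3').
move=> b [[u3 g3] [Hg3' Hsg3]] [/= HR3 HQ3'].
have [Hg3 HQ3] := (succ_iff HS Hg Pg).2 (conj Hg3' HQ3').
exists (exist _ (u3, g3) (conj Hg3 Hsg3)); split => //=.
by split=> //; case: ((Fev_iff HS).1 Hg3').
Qed.
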